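(* Let $W_1$ and $W_2$ be wedges in the hyperbolic plane sharing a common boundary geodesic $g_2$, with their vertices at the two opposite ideal endpoints of $g_2$; let $g_1$ and $g_3$ be the other boundary geodesics of $W_1$ and $W_2$ respectively. Orient $g_2$ so that $g_1$ lies on its left, and let $s(g_2)$ be the shear along $g_2$ of the ideal quadrilateral whose vertices are the endpoints of $g_1$ and $g_3$. Let $h_1$ be a horocyclic arc in $W_1$ orthogonal to and connecting its two boundary sides, and let $h_2$ be the horocyclic arc in $W_2$ orthogonal to its boundary sides that continues $h_1$ (starting at the endpoint of $h_1$ on $g_2$). If $(W_1,W_2)$ is left-open then $\ell(h_2)=\dfrac{e^{s(g_2)}}{\ell(h_1)}$; if $(W_1,W_2)$ is left-closed then $\ell(h_2)=\dfrac{e^{-s(g_2)}}{\ell(h_1)}$.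
   Context: A wedge is the region between two geodesics sharing one ideal endpoint (its vertex); horocyclic arcs in a wedge lie on horocycles centered at its vertex. With $g_2$ oriented so that $g_1$ is on its left, the pair $(W_1,W_2)$ is left-open if $g_2$ shares its initial point with $g_1$ (and its terminal point with $g_3$), and left-closed if $g_2$ shares its initial point with $g_3$ (and its terminal point with $g_1$). Shear: for two ideal triangles $\Delta_1,\Delta_2$ sharing a side $g$, orient $g$ with $\Delta_1$ on its left; $s(g)$ is the signed distance along $g$ from the foot of the perpendicular from the third vertex of $\Delta_1$ to the foot of the perpendicular from the third vertex of $\Delta_2$. $\ell(\cdot)$ denotes hyperbolic length. *)

(* Defs.v *)
From Stdlib Require Import Reals.
From Coquelicot Require Import Coquelicot.
Open Scope R_scope.

Inductive ipt := Fin (r : R) | Inf.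

Definition inH (p : R * R) : Prop := 0 < snd p.

Definition on_geod (a b : ipt) (p : R * R) : Prop :=
  inH p /\
  match a, b with
  | Fin a, Fin b => a <> b /\
      (fst p - (a + b) / 2) ^ 2 + snd p ^ 2 = ((a - b) / 2) ^ 2
  | Fin a, Inf | Inf, Fin a => fst p = a
  | Inf, Inf => False
  end.

(* p lies in the open half-plane to the LEFT of the geodesic oriented
   from a to b (standard orientation of the upper half-plane). *)
Definition left_of (a b : ipt) (p : R * R) : Prop :=
  inH p /\
  match a, b with
  | Fin a, Fin b =>
      (a < b /\ (fst p - (a + b) / 2) ^ 2 + snd p ^ 2 > ((a - b) / 2) ^ 2) \/
      (b < a /\ (fst p - (a + b) / 2) ^ 2 + snd p ^ 2 < ((a - b) / 2) ^ 2)
  | Fin a, Inf => fst p < a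
  | Inf, Fin b => fst p > b
  | Inf, Inf => False
  end.

Definition geod_left_of (a b c d : ipt) : Prop :=
  forall p, on_geod c d p -> left_of a b p.

Definition closed_side (a b : ipt) (q p : R * R) : Prop :=
  on_geod a b p \/ (left_of a b q /\ left_of a b p) \/
  (left_of b a q /\ left_of b a p).

Definition wedge_cl (v a a' : ipt) (p : R * R) : Prop :=
  inH p /\
  (forall q, on_geod v a' q -> closed_side v a q p) /\
  (forall q, on_geod v a q -> closed_side v a' q p).

(* Horocycle centred at the ideal point v, with parameter c > 0:
   for v = ∞ the horizontal line y = c; for v = Fin r the Euclidean
   circle of diameter c tangent to the real axis at r. *)
Definition horocycle (v : ipt) (c : R) (p : R * R) : Prop :=
  inH p /\ 0 < c /\
  match v with
  | Inf => snd p = c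
  | Fin r => (fst p - r) ^ 2 + (snd p - c / 2) ^ 2 = (c / 2) ^ 2
  end.

(* The horocyclic arc in the wedge (vertex v, sides (v,a),(v,a')) lying on
   the horocycle of parameter c centred at v: it joins the two sides and is
   orthogonal to them. *)
Definition horo_arc (v a a' : ipt) (c : R) (p : R * R) : Prop :=
  horocycle v c p /\ wedge_cl v a a' p.

(* Euclidean description of a geodesic: vertical line x = r (true, r, 0)
   or semicircle with centre m and radius rho (false, m, rho). *)
Definition gdesc (a b : ipt) : option (bool * R * R) :=
  match a, b with
  | Fin a, Fin b =>
      if Req_EM_T a b then None else Some (false, (a + b) / 2, Rabs (a - b) / 2)
  | Fin a, Inf | Inf, Fin a => Some (true, a, 0)
  | Inf, Inf => None
  end.

(* The geodesics (a,b) and (c,d) meet orthogonally (the model is conformal,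
   so hyperbolic angles equal Euclidean angles). *)
Definition geod_orth (a b c d : ipt) : Prop :=
  match gdesc a b, gdesc c d with
  | Some (false, m1, r1), Some (false, m2, r2) => (m1 - m2) ^ 2 = r1 ^ 2 + r2 ^ 2
  | Some (true, r, _), Some (false, m, _) => m = r
  | Some (false, m, _), Some (true, r, _) => m = r
  | _, _ => False
  end.

Definition foot (p a b : ipt) (f : R * R) : Prop :=
  on_geod a b f /\ exists e, e <> p /\ geod_orth p e a b /\ on_geod p e f.

Definition arcosh (u : R) : R := ln (u + sqrt (u ^ 2 - 1)).
Definition dH (p q : R * R) : R :=
  arcosh (1 + ((fst p - fst q) ^ 2 + (snd p - snd q) ^ 2) /
              (2 * snd p * snd q)).

Definition ahead (a b : ipt) (f1 f2 : R * R) : Prop :=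
  match a, b with
  | Fin a, Fin b => (fst f2 - fst f1) * (b - a) > 0
  | Fin _, Inf => snd f2 > snd f1
  | Inf, Fin _ => snd f2 < snd f1
  | Inf, Inf => False
  end.

Definition sdist (a b : ipt) (f1 f2 : R * R) (d : R) : Prop :=
  (ahead a b f1 f2 /\ d = dH f1 f2) \/ (~ ahead a b f1 f2 /\ d = - dH f1 f2).

(* Shear along the geodesic g oriented a -> b between the ideal triangles
   Δ1 = (a,b,p) (on the left of g) and Δ2 = (a,b,q): signed distance from
   the foot of the perpendicular from p to that from q. *)
Definition is_shear (a b p q : ipt) (s : R) : Prop :=
  exists f1 f2, foot p a b f1 /\ foot q a b f2 /\ sdist a b f1 f2 s.

Definition hlen (g : R -> R * R) : R :=
  RInt (fun t => sqrt ((Derive (fun u => fst (g u)) t) ^ 2 +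
                       (Derive (fun u => snd (g u)) t) ^ 2) / snd (g t)) 0 1.

Definition param_arc (g : R -> R * R) (S : R * R -> Prop) : Prop :=
  (forall t, 0 <= t <= 1 ->
     ex_derive (fun u => fst (g u)) t /\ ex_derive (fun u => snd (g u)) t /\
     continuous (Derive (fun u => fst (g u))) t /\
     continuous (Derive (fun u => snd (g u))) t) /\
  (forall t1 t2, 0 <= t1 <= 1 -> 0 <= t2 <= 1 -> g t1 = g t2 -> t1 = t2) /\
  (forall p, S p <-> exists t, 0 <= t <= 1 /\ g t = p).

Definition arc_length (S : R * R -> Prop) (L : R) : Prop :=
  exists g, param_arc g S /\ hlen g = L.

(* Main.v *)
Require Import Defs.
From Stdlib Require Import Reals.
From Coquelicot Require Import Coquelicot.
Open Scope R_scope.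
From Stdlib Require Import Lra Psatz.

Lemma step01 (t d : R) : 0 <= t <= 1 -> 0 < d ->
  exists h, h <> 0 /\ Rabs h < d /\ 0 <= t + h <= 1.
Proof.
  intros Ht Hd.
  set (m := Rmin (d/2) (1/2)).
  assert (Hm1 : 0 < m) by (unfold m, Rmin; destruct Rle_dec; lra).
  assert (Hm2 : m <= d/2) by apply Rmin_l.
  assert (Hm3 : m <= 1/2) by apply Rmin_r.
  destruct (Rle_dec t (1/2)).
  - exists m. split; [lra|]. split; [rewrite Rabs_right; lra | lra].
  - exists (-m). split; [lra|]. split; [rewrite Rabs_left; lra | lra].
Qed.

Lemma zero_deriv (h : R -> R) t l :
  (forall u, 0 <= u <= 1 -> h u = 0) -> 0 <= t <= 1 -> is_derive h t l -> l = 0.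
Proof.
  intros H0 Ht Hd. apply is_derive_Reals in Hd.
  destruct (Req_dec l 0) as [E|E]; auto. exfalso.
  assert (Hl : 0 < Rabs l / 2) by (apply Rabs_pos_lt in E; lra).
  destruct (Hd (mkposreal _ Hl) Hl) as [del Hdel].
  destruct (step01 t del Ht (cond_pos del)) as [hh [H1 [H2 H3]]].
  specialize (Hdel hh H1 H2). simpl in Hdel.
  rewrite (H0 _ H3), (H0 _ Ht) in Hdel.
  replace ((0 - 0) / hh - l) with (- l) in Hdel by (field; auto).
  rewrite Rabs_Ropp in Hdel. lra.
Qed.

Lemma deriv_incr (f : R -> R) t l :
  (forall s u, 0 <= s -> s < u -> u <= 1 -> f s < f u) -> 0 <= t <= 1 ->
  is_derive f t l -> 0 <= l.
Proof.
  intros Hi Ht Hd. apply is_derive_Reals in Hd.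
  destruct (Rle_dec 0 l) as [E|E]; auto. exfalso.
  assert (Hl : 0 < - l) by lra.
  destruct (Hd (-l) Hl) as [del Hdel].
  destruct (step01 t del Ht (cond_pos del)) as [hh [H1 [H2 H3]]].
  specialize (Hdel hh H1 H2).
  assert (Q : 0 < (f (t + hh) - f t) / hh).
  { destruct (Rlt_dec 0 hh).
    - apply Rdiv_lt_0_compat; [|lra]. assert (f t < f (t+hh)) by (apply Hi; lra). lra.
    - assert (hh < 0) by lra.
      assert (f (t+hh) < f t) by (apply Hi; lra).
      replace ((f (t + hh) - f t) / hh) with ((f t - f (t+hh)) / (-hh)) by (field; lra).
      apply Rdiv_lt_0_compat; lra. }
  revert Hdel Q. generalize ((f (t + hh) - f t) / hh). intros q Hdel Q.
  rewrite Rabs_right in Hdel; lra.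
Qed.

Lemma ivt_in (f : R -> R) a b y :
  (forall t, 0 <= t <= 1 -> continuity_pt f t) -> 0 <= a -> a < b -> b <= 1 ->
  f a < y < f b -> exists z, a <= z <= b /\ f z = y.
Proof.
  intros Hc Ha Hab Hb Hy.
  destruct (Ranalysis5.IVT_interv (fun t => f t - y) a b) as [z [Hz1 Hz2]]; auto.
  - intros t Ht. apply continuity_pt_minus; [apply Hc; lra | apply continuity_pt_const; intros u v; auto].
  - lra. - lra.
  - exists z; split; auto; lra.
Qed.

Lemma ivt_in' (f : R -> R) a b y :
  (forall t, 0 <= t <= 1 -> continuity_pt f t) -> 0 <= a -> a < b -> b <= 1 ->
  f b < y < f a -> exists z, a <= z <= b /\ f z = y.
Proof.
  intros Hc Ha Hab Hb Hy.
  destruct (ivt_in (fun t => - f t) a b (-y)) as [z [Hz1 Hz2]]; auto.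
  - intros t Ht. apply continuity_pt_opp; auto.
  - lra.
  - exists z; split; auto; lra.
Qed.

Definition injon (f : R -> R) := forall t1 t2, 0 <= t1 <= 1 -> 0 <= t2 <= 1 -> f t1 = f t2 -> t1 = t2.

Lemma key_mono (f : R -> R) a b t :
  (forall t, 0 <= t <= 1 -> continuity_pt f t) -> injon f ->
  0 <= a -> a < t -> t < b -> b <= 1 -> f a < f b -> f a < f t < f b.
Proof.
  intros Hc Hi Ha Hat Htb Hb Hf.
  assert (N1 : f t <> f a) by (intro E; apply Hi in E; lra).
  assert (N2 : f t <> f b) by (intro E; apply Hi in E; lra).
  destruct (Rlt_dec (f t) (f a)).
  - destruct (ivt_in f t b (f a)) as [z [Hz E]]; try lra; auto.
    apply Hi in E; lra.
  - destruct (Rlt_dec (f b) (f t)).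
    + destruct (ivt_in f a t (f b)) as [z [Hz E]]; try lra; auto.
      apply Hi in E; lra.
    + lra.
Qed.

Lemma inc_of (f : R -> R) :
  (forall t, 0 <= t <= 1 -> continuity_pt f t) -> injon f -> f 0 < f 1 ->
  forall s u, 0 <= s -> s < u -> u <= 1 -> f s < f u.
Proof.
  intros Hc Hi H01 s u Hs Hsu Hu.
  destruct (Req_dec s 0) as [E0|E0]; destruct (Req_dec u 1) as [E1|E1]; subst.
  - auto.
  - apply (key_mono f 0 1 u); auto; lra.
  - apply (key_mono f 0 1 s); auto; lra.
  - assert (H1 : f 0 < f u) by (apply (key_mono f 0 1 u); auto; lra).
    apply (key_mono f 0 u s); auto; lra.
Qed.

Lemma mono_of (f : R -> R) :
  (forall t, 0 <= t <= 1 -> continuity_pt f t) -> injon f ->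
  (forall s u, 0 <= s -> s < u -> u <= 1 -> f s < f u) \/
  (forall s u, 0 <= s -> s < u -> u <= 1 -> f u < f s).
Proof.
  intros Hc Hi.
  destruct (Rtotal_order (f 0) (f 1)) as [H|[H|H]].
  - left; apply inc_of; auto.
  - apply Hi in H; lra.
  - right. intros s u Hs Hsu Hu.
    assert (- f s < - f u); [|lra].
    apply (inc_of (fun t => - f t)); try lra.
    + intros t Ht; apply continuity_pt_opp; auto.
    + intros t1 t2 H1 H2 E; apply Hi; auto; lra.
Qed.


Lemma cpt_cont (f : R -> R) x : continuity_pt f x -> continuous f x.
Proof. intro H. apply continuity_pt_filterlim in H. exact H. Qed.

Lemma len_core (psi Fd : R -> R) (A B L : R) :
  (forall t, 0 <= t <= 1 -> is_derive psi t (Fd t)) ->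
  (forall t, 0 <= t <= 1 -> continuity_pt Fd t) ->
  injon psi ->
  (forall t, 0 <= t <= 1 -> Rmin A B <= psi t <= Rmax A B) ->
  (exists t, 0 <= t <= 1 /\ psi t = A) -> (exists t, 0 <= t <= 1 /\ psi t = B) ->
  L = RInt (fun t => Rabs (Fd t)) 0 1 -> L = Rabs (A - B).
Proof.
  intros Hd Hc Hi Hb [tA [HtA EA]] [tB [HtB EB]] HL.
  assert (Hpc : forall t, 0 <= t <= 1 -> continuity_pt psi t).
  { intros t Ht. apply continuity_pt_filterlim.
    apply (ex_derive_continuous (K:=R_AbsRing) (V:=R_NormedModule)).
    exists (Fd t); auto. }
  assert (Hb0 := Hb 0 ltac:(lra)). assert (Hb1 := Hb 1 ltac:(lra)).
  destruct (mono_of psi Hpc Hi) as [Inc|Dec].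
  - assert (Hpos : forall t, 0 <= t <= 1 -> 0 <= Fd t).
    { intros t Ht. apply (deriv_incr psi t); auto. }
    assert (Hbt : forall t, 0 <= t <= 1 -> psi 0 <= psi t <= psi 1).
    { intros t Ht. destruct (Req_dec t 0); destruct (Req_dec t 1); subst; try lra.
      - assert (psi 0 < psi 1) by (apply Inc; lra). lra.
      - assert (psi 0 < psi 1) by (apply Inc; lra). lra.
      - assert (psi 0 < psi t) by (apply Inc; lra). assert (psi t < psi 1) by (apply Inc; lra). lra. }
    assert (E : RInt (fun t => Rabs (Fd t)) 0 1 = psi 1 - psi 0).
    { rewrite (RInt_ext _ Fd).
      - apply is_RInt_unique. apply (is_RInt_derive psi Fd 0 1).
        + intros x Hx. rewrite Rmin_left, Rmax_right in Hx by lra. auto.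
        + intros x Hx. rewrite Rmin_left, Rmax_right in Hx by lra. apply cpt_cont; auto.
      - intros x Hx. rewrite Rmin_left, Rmax_right in Hx by lra. rewrite Rabs_right; auto.
        apply Rle_ge, Hpos; lra. }
    rewrite HL, E. pose proof (Hbt tA HtA). pose proof (Hbt tB HtB).
    revert Hb0 Hb1. unfold Rmin, Rmax. destruct (Rle_dec A B); intros;
    unfold Rabs; destruct Rcase_abs; lra.
  - assert (Hpos : forall t, 0 <= t <= 1 -> 0 <= - Fd t).
    { intros t Ht. apply (deriv_incr (fun t => - psi t) t); auto.
      - intros s u Hs Hsu Hu. specialize (Dec s u Hs Hsu Hu). lra.
      - apply (is_derive_opp psi t (Fd t)); auto. }
    assert (Hbt : forall t, 0 <= t <= 1 -> psi 1 <= psi t <= psi 0).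
    { intros t Ht. destruct (Req_dec t 0); destruct (Req_dec t 1); subst; try lra.
      - assert (psi 1 < psi 0) by (apply Dec; lra). lra.
      - assert (psi 1 < psi 0) by (apply Dec; lra). lra.
      - assert (psi t < psi 0) by (apply Dec; lra). assert (psi 1 < psi t) by (apply Dec; lra). lra. }
    assert (E : RInt (fun t => Rabs (Fd t)) 0 1 = - psi 1 - - psi 0).
    { rewrite (RInt_ext _ (fun t => - Fd t)).
      - apply is_RInt_unique. apply (is_RInt_derive (fun t => - psi t) (fun t => - Fd t) 0 1).
        + intros x Hx. rewrite Rmin_left, Rmax_right in Hx by lra.
          apply (is_derive_opp psi x (Fd x)); auto.
        + intros x Hx. rewrite Rmin_left, Rmax_right in Hx by lra. apply cpt_cont.
          apply continuity_pt_opp; auto.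
      - intros x Hx. rewrite Rmin_left, Rmax_right in Hx by lra. rewrite Rabs_left1; auto.
        specialize (Hpos x ltac:(lra)). lra. }
    rewrite HL, E. pose proof (Hbt tA HtA). pose proof (Hbt tB HtB).
    revert Hb0 Hb1. unfold Rmin, Rmax. destruct (Rle_dec A B); intros;
    unfold Rabs; destruct Rcase_abs; lra.
Qed.


Definition uv (v : ipt) (P : R * R) : R :=
  match v with
  | Fin r => (fst P - r) / ((fst P - r) ^ 2 + snd P ^ 2)
  | Inf => - fst P
  end.

Definition muv (v w : ipt) : R :=
  match v, w with
  | Fin r, Fin b => 1 / (b - r)
  | Fin _, Inf => 0
  | Inf, Fin b => - b
  | Inf, Inf => 0
  end.

Lemma lt_inv_pos u k : 0 < k -> (u < 1 / k <-> u * k < 1).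
Proof.
  intros Hk. split; intro H.
  - apply (Rmult_lt_compat_r k) in H; auto. replace (1 / k * k) with 1 in H by (field; lra). lra.
  - apply (Rmult_lt_reg_r k); auto. replace (1 / k * k) with 1 by (field; lra). lra.
Qed.

Lemma lt_inv_neg u k : k < 0 -> (u < 1 / k <-> 1 < u * k).
Proof.
  intros Hk. split; intro H.
  - assert (H' : - (1/k) < - u) by lra.
    apply (Rmult_lt_compat_r (-k)) in H'; [|lra]. replace (- (1 / k) * - k) with 1 in H' by (field; lra). lra.
  - assert (- (1/k) < - u); [|lra].
    apply (Rmult_lt_reg_r (-k)); [lra|]. replace (- (1 / k) * - k) with 1 by (field; lra). lra.
Qed.

Lemma Dpos (P : R * R) r : inH P -> 0 < (fst P - r) ^ 2 + snd P ^ 2.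
Proof. unfold inH; intro H.
  assert (0 <= (fst P - r)^2) by apply pow2_ge_0.
  assert (0 < snd P ^2) by (apply pow_lt; auto). lra. Qed.

Lemma side_FF r b P : r <> b -> inH P ->
  let u := (fst P - r) / ((fst P - r) ^ 2 + snd P ^ 2) in
  let E := (fst P - (r + b) / 2) ^ 2 + snd P ^ 2 - ((r - b) / 2) ^ 2 in
  (E = 0 <-> u = 1 / (b - r)) /\
  ((0 < E /\ r < b) \/ (E < 0 /\ b < r) <-> u < 1 / (b - r)) /\
  ((0 < E /\ b < r) \/ (E < 0 /\ r < b) <-> 1 / (b - r) < u).
Proof.
  intros Hrb HP u E.
  pose proof (Dpos P r HP) as HD.
  set (D := (fst P - r) ^ 2 + snd P ^ 2) in *.
  assert (Hx : fst P - r = u * D) by (unfold u; field; lra).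
  assert (HE : E = D * (1 - u * (b - r))).
  { unfold E. replace (D * (1 - u * (b - r))) with (D - (u * D) * (b - r)) by ring.
    rewrite <- Hx. unfold D. field. }
  clearbody u E D.
  destruct (Rlt_dec r b) as [Hlt|Hge].
  - assert (Hk : 0 < b - r) by lra.
    pose proof (lt_inv_pos u (b - r) Hk) as L1.
    assert (L2 : 1 / (b - r) < u <-> 1 < u * (b - r)).
    { split; intro H.
      - apply (Rmult_lt_compat_r (b - r)) in H; auto. replace (1 / (b - r) * (b - r)) with 1 in H by (field; lra). lra.
      - apply (Rmult_lt_reg_r (b - r)); auto. replace (1 / (b - r) * (b - r)) with 1 by (field; lra). lra. }
    assert (L3 : u = 1 / (b - r) <-> u * (b - r) = 1).
    { split; intro H. rewrite H; field; lra. apply (Rmult_eq_reg_r (b - r)); [|lra].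
      rewrite H. field; lra. }
    rewrite L1, L2, L3, HE. split; [|split]; split; intro H.
    + assert (D * (1 - u * (b - r)) = 0) by auto. destruct (Rmult_integral _ _ H0); lra.
    + rewrite H; ring.
    + destruct H as [[H1 H2]|[H1 H2]]; [|lra]. nra.
    + left; split; [nra|lra].
    + destruct H as [[H1 H2]|[H1 H2]]; [lra|]. nra.
    + right; split; [nra|lra].
  - assert (Hk : b - r < 0) by lra.
    pose proof (lt_inv_neg u (b - r) Hk) as L1.
    assert (L2 : 1 / (b - r) < u <-> u * (b - r) < 1).
    { split; intro H.
      - assert (H' : -u < - (1/(b-r))) by lra.
        apply (Rmult_lt_compat_r (-(b - r))) in H'; [|lra]. replace (- (1 / (b - r)) * - (b - r)) with 1 in H' by (field; lra). lra.
      - assert (- u < - (1/(b-r))); [|lra].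
        apply (Rmult_lt_reg_r (-(b - r))); [lra|]. replace (- (1 / (b - r)) * - (b - r)) with 1 by (field; lra). lra. }
    assert (L3 : u = 1 / (b - r) <-> u * (b - r) = 1).
    { split; intro H. rewrite H; field; lra. apply (Rmult_eq_reg_r (b - r)); [|lra].
      rewrite H. field; lra. }
    rewrite L1, L2, L3, HE. split; [|split]; split; intro H.
    + assert (D * (1 - u * (b - r)) = 0) by auto. destruct (Rmult_integral _ _ H0); lra.
    + rewrite H; ring.
    + destruct H as [[H1 H2]|[H1 H2]]; [lra|]. nra.
    + right; split; [nra|lra].
    + destruct H as [[H1 H2]|[H1 H2]]; [|lra]. nra.
    + left; split; [nra|lra].
Qed.

Lemma side_char v w P : v <> w ->
  (on_geod v w P <-> inH P /\ uv v P = muv v w) /\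
  (left_of v w P <-> inH P /\ uv v P < muv v w) /\
  (left_of w v P <-> inH P /\ muv v w < uv v P).
Proof.
  intro Hvw. unfold on_geod, left_of. destruct v as [r|]; destruct w as [b|]; cbn [uv muv].
  - assert (Hrb : r <> b) by (intro E; apply Hvw; subst; auto).
    split; [|split]; split; intros [HP H]; split; auto.
    + destruct H as [_ H]. apply (proj1 (side_FF r b P Hrb HP)). simpl. lra.
    + split; auto. apply (proj1 (side_FF r b P Hrb HP)) in H. simpl in H. lra.
    + apply (proj1 (proj2 (side_FF r b P Hrb HP))). simpl. lra.
    + apply (proj1 (proj2 (side_FF r b P Hrb HP))) in H. simpl in H. lra.
    + apply (proj2 (proj2 (side_FF r b P Hrb HP))). simpl.
      replace ((b + r) / 2) with ((r + b) / 2) in H by field.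
      replace (((b - r) / 2) ^ 2) with (((r - b) / 2) ^ 2) in H by field. lra.
    + apply (proj2 (proj2 (side_FF r b P Hrb HP))) in H. simpl in H.
      replace ((b + r) / 2) with ((r + b) / 2) by field.
      replace (((b - r) / 2) ^ 2) with (((r - b) / 2) ^ 2) by field. lra.
  - split; [|split]; split; intros [HP H]; split; auto;
    pose proof (Dpos P r HP) as HD;
    set (D := (fst P - r) ^ 2 + snd P ^ 2) in *;
    assert (Hx : fst P - r = (fst P - r) / D * D) by (field; lra);
    set (u := (fst P - r) / D) in *; clearbody u D.
    + assert (u * D = 0) by lra. destruct (Rmult_integral _ _ H0); lra.
    + rewrite H in Hx; lra.
    + nra.
    + nra.
    + nra.
    + nra.
  - split; [|split]; split; intros [HP H]; split; auto; lra.
  - exfalso; auto.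
Qed.

Lemma geod_pt v w : v <> w -> exists P, on_geod v w P.
Proof.
  intro H. destruct v as [r|]; destruct w as [b|].
  - assert (Hrb : r <> b) by (intro E; apply H; subst; auto).
    exists ((r + b) / 2, Rabs (r - b) / 2). unfold on_geod, inH; cbn [fst snd].
    split. { assert (0 < Rabs (r - b)) by (apply Rabs_pos_lt; lra). lra. }
    split; auto. replace ((r + b) / 2 - (r + b) / 2) with 0 by field.
    replace ((Rabs (r - b) / 2) ^ 2) with ((Rabs (r - b)) ^ 2 / 4) by field.
    rewrite pow2_abs. field.
  - exists (r, 1). unfold on_geod, inH; simpl; lra.
  - exists (b, 1). unfold on_geod, inH; simpl; lra.
  - exfalso; auto.
Qed.

Lemma inv_ne0 x : x <> 0 -> 1 / x <> 0.
Proof. intro H. unfold Rdiv; rewrite Rmult_1_l. apply Rinv_neq_0_compat. auto. Qed.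

Lemma muv_inj v a b : v <> a -> v <> b -> muv v a = muv v b -> a = b.
Proof.
  intros Ha Hb E. destruct v as [r|]; destruct a as [a|]; destruct b as [b|]; simpl in E; auto;
  try (exfalso; congruence).
  - assert (a <> r) by (intro; subst; auto). assert (b <> r) by (intro; subst; auto).
    f_equal. assert (a - r <> 0) by lra. assert (b - r <> 0) by lra.
    assert (Ha' : / (a - r) = / (b - r)) by (unfold Rdiv in E; lra).
    apply Rinv_eq_reg in Ha'. lra.
  - exfalso. assert (a <> r) by (intro; subst; auto).
    apply (inv_ne0 (a - r)); auto. lra.
  - exfalso. assert (b <> r) by (intro; subst; auto).
    apply (inv_ne0 (b - r)); auto. lra.
  - f_equal; lra.
Qed.

Lemma wedge_char v a b P : v <> a -> v <> b -> a <> b ->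
  (wedge_cl v a b P <-> inH P /\ Rmin (muv v a) (muv v b) <= uv v P <= Rmax (muv v a) (muv v b)).
Proof.
  intros Ha Hb Hab.
  assert (Hm : muv v a <> muv v b) by (intro E; apply Hab; apply (muv_inj v); auto).
  destruct (side_char v a P Ha) as [Aon [Al Ar]].
  destruct (side_char v b P Hb) as [Bon [Bl Br]].
  unfold wedge_cl, closed_side. split.
  - intros [HP [H1 H2]]. split; auto.
    destruct (geod_pt v b Hb) as [qb Hqb]. destruct (geod_pt v a Ha) as [qa Hqa].
    specialize (H1 qb Hqb). specialize (H2 qa Hqa).
    apply (side_char v b qb Hb) in Hqb. apply (side_char v a qa Ha) in Hqa.
    destruct (side_char v a qb Ha) as [_ [Ql Qr]].
    destruct (side_char v b qa Hb) as [_ [Ql' Qr']].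
    rewrite Aon, Al, Ar, Ql, Qr in H1. rewrite Bon, Bl, Br, Ql', Qr' in H2.
    destruct Hqb as [_ Eb]. destruct Hqa as [_ Ea].
    unfold Rmin, Rmax; destruct Rle_dec; lra.
  - intros [HP Hbt]. split; auto. split.
    + intros q Hq. apply (side_char v b q Hb) in Hq. destruct Hq as [Hq Eq].
      destruct (side_char v a q Ha) as [_ [Ql Qr]].
      rewrite Aon, Al, Ar, Ql, Qr. destruct (Req_dec (uv v P) (muv v a)) as [EE|NE]; [left; auto| right].
      destruct (Rlt_dec (muv v a) (muv v b)); [right|left];
      revert Hbt; unfold Rmin, Rmax; destruct Rle_dec; intros; repeat split; auto; lra.
    + intros q Hq. apply (side_char v a q Ha) in Hq. destruct Hq as [Hq Eq].
      destruct (side_char v b q Hb) as [_ [Ql Qr]].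
      rewrite Bon, Bl, Br, Ql, Qr. destruct (Req_dec (uv v P) (muv v b)) as [EE|NE]; [left; auto| right].
      destruct (Rlt_dec (muv v b) (muv v a)); [right|left];
      revert Hbt; unfold Rmin, Rmax; destruct Rle_dec; intros; repeat split; auto; lra.
Qed.


Definition phi (v : ipt) (c : R) (P : R * R) : R :=
  match v with Fin r => (fst P - r) / snd P | Inf => fst P / c end.
Definition scal (v : ipt) (c : R) : R :=
  match v with Fin _ => c | Inf => - / c end.
Definition Phi (v : ipt) (c : R) (w : ipt) : R := scal v c * muv v w.

Definition btw a b x := (a - x) * (b - x) <= 0.

Lemma btw_mm a b x : btw a b x <-> Rmin a b <= x <= Rmax a b.
Proof.
  unfold btw, Rmin, Rmax. destruct Rle_dec; split; intro H; try nra.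
Qed.

Lemma btw_scale k a b x : k <> 0 -> (btw (k*a) (k*b) (k*x) <-> btw a b x).
Proof.
  intro Hk. unfold btw.
  replace ((k * a - k * x) * (k * b - k * x)) with ((k * k) * ((a - x) * (b - x))) by ring.
  assert (0 < k * k) by (destruct (Rlt_dec 0 k); nra).
  split; intro H0; nra.
Qed.

Lemma scal_ne0 v c : 0 < c -> scal v c <> 0.
Proof. intro Hc. destruct v; simpl; [lra|]. apply Ropp_neq_0_compat, Rinv_neq_0_compat; lra. Qed.

Lemma horoF r c P : horocycle (Fin r) c P -> (fst P - r) ^ 2 + snd P ^ 2 = c * snd P.
Proof. intros [_ [_ H]].
  assert (E : (fst P - r) ^ 2 + snd P ^ 2 - c * snd P = (fst P - r) ^ 2 + (snd P - c / 2) ^ 2 - (c / 2) ^ 2) by field.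
  lra. Qed.

Lemma phi_uv v c P : horocycle v c P -> phi v c P = scal v c * uv v P.
Proof.
  intro H. pose proof H as [HP [Hc _]]. unfold inH in HP.
  destruct v as [r|]; cbn [fst snd phi scal uv horocycle].
  - rewrite (horoF r c P H). field; lra.
  - destruct H as [_ [_ E]]. field; lra.
Qed.

Lemma phi_inj v c P Q : horocycle v c P -> horocycle v c Q -> phi v c P = phi v c Q -> P = Q.
Proof.
  intros HPh HQh E. pose proof HPh as [HP [Hc _]]. pose proof HQh as [HQ _]. unfold inH in *.
  destruct P as [x1 y1]; destruct Q as [x2 y2]. cbn [fst snd phi scal uv horocycle] in *.
  destruct v as [r|].
  - pose proof (horoF r c _ HPh) as H1. pose proof (horoF r c _ HQh) as H2. cbn [fst snd phi scal uv horocycle] in *.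
    set (t := (x1 - r) / y1) in *.
    assert (X1 : x1 - r = t * y1) by (unfold t; field; lra).
    assert (X2 : x2 - r = t * y2) by (rewrite E; field; lra).
    assert (Y1 : y1 * (t^2 + 1) = c).
    { apply (Rmult_eq_reg_l y1); [|lra].
      replace (y1 * (y1 * (t ^ 2 + 1))) with ((t * y1) ^ 2 + y1 ^ 2) by ring.
      rewrite <- X1, H1. ring. }
    assert (Y2 : y2 * (t^2 + 1) = c).
    { apply (Rmult_eq_reg_l y2); [|lra].
      replace (y2 * (y2 * (t ^ 2 + 1))) with ((t * y2) ^ 2 + y2 ^ 2) by ring.
      rewrite <- X2, H2. ring. }
    assert (y1 = y2).
    { apply (Rmult_eq_reg_r (t^2+1)); [lra|]. assert (0 <= t^2) by apply pow2_ge_0. lra. }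
    subst y2. f_equal. lra.
  - destruct HPh as [_ [_ E1]]; destruct HQh as [_ [_ E2]]. cbn [fst snd phi scal uv horocycle] in *. subst.
    f_equal. apply (Rmult_eq_reg_r (/ c)); [|apply Rinv_neq_0_compat; lra]. exact E.
Qed.

Lemma phi_pt v c t : 0 < c -> exists P, horocycle v c P /\ phi v c P = t.
Proof.
  intro Hc. assert (0 <= t^2) by apply pow2_ge_0. destruct v as [r|].
  - exists (r + t * (c / (1 + t^2)), c / (1 + t^2)).
    assert (0 < c / (1 + t^2)) by (apply Rdiv_lt_0_compat; lra).
    unfold horocycle, phi, inH; cbn [fst snd phi scal uv horocycle]. split.
    { split; [auto|split; [lra|field; lra]]. }
    field; lra.
  - exists (t * c, c). unfold horocycle, phi, inH; cbn [fst snd phi scal uv horocycle]. split; [|field; lra]. split; [lra|split; [lra|auto]].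
Qed.


Lemma cpt_Fin (X Y dX dY : R -> R) r t :
  continuity_pt X t -> continuity_pt Y t -> continuity_pt dX t -> continuity_pt dY t ->
  Y t <> 0 ->
  continuity_pt (fun u => (dX u * Y u - (X u - r) * dY u) / (Y u * Y u)) t.
Proof.
  intros H1 H2 H3 H4 H5.
  apply (continuity_pt_div (fun u => dX u * Y u - (X u - r) * dY u) (fun u => Y u * Y u)).
  - apply (continuity_pt_minus (fun u => dX u * Y u) (fun u => (X u - r) * dY u)).
    + apply (continuity_pt_mult dX Y); auto.
    + apply (continuity_pt_mult (fun u => X u - r) dY); auto.
      apply (continuity_pt_minus X (fun _ => r)); auto.
      apply continuity_pt_const; intros u v; auto.
  - apply (continuity_pt_mult Y Y); auto.
  - intro E. apply Rmult_integral in E. destruct E; auto.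
Qed.

Lemma speed_Fin A Y dX dY c : 0 < Y -> A ^ 2 + Y ^ 2 = c * Y ->
  2 * A * dX + 2 * Y * dY - c * dY = 0 ->
  sqrt (dX ^ 2 + dY ^ 2) / Y = Rabs ((dX * Y - A * dY) / (Y * Y)).
Proof.
  intros HY H1 H2.
  assert (I : (dX * Y - A * dY) ^ 2 - (dX ^ 2 + dY ^ 2) * Y ^ 2 =
     - Y * dY * (2 * A * dX + 2 * Y * dY - c * dY) + dY ^ 2 * (A ^ 2 + Y ^ 2 - c * Y)) by ring.
  rewrite H2, H1 in I.
  assert (E : dX ^ 2 + dY ^ 2 = Rsqr ((dX * Y - A * dY) / (Y * Y) * Y)).
  { unfold Rsqr. field_simplify; [|lra]. apply (Rmult_eq_reg_r (Y ^ 2)).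
    field_simplify; [|lra]. lra. apply pow_nonzero; lra. }
  rewrite E, sqrt_Rsqr_abs, Rabs_mult, (Rabs_right Y) by lra. field. lra.
Qed.

Lemma speed_Inf dX c : 0 < c -> sqrt (dX ^ 2 + 0 ^ 2) / c = Rabs (dX / c).
Proof.
  intro Hc. replace (dX ^ 2 + 0 ^ 2) with (Rsqr dX) by (unfold Rsqr; ring).
  rewrite sqrt_Rsqr_abs. unfold Rdiv. rewrite Rabs_mult, (Rabs_right (/ c)); auto.
  apply Rle_ge, Rlt_le, Rinv_0_lt_compat; auto.
Qed.

Lemma cont_of_ex (f : R -> R) t : ex_derive f t -> continuity_pt f t.
Proof.
  intro H. apply continuity_pt_filterlim.
  apply (ex_derive_continuous (K:=R_AbsRing) (V:=R_NormedModule)). auto.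
Qed.

Lemma horo_len v a b c L : 0 < c -> v <> a -> v <> b -> a <> b ->
  arc_length (horo_arc v a b c) L -> L = Rabs (Phi v c a - Phi v c b).
Proof.
  intros Hc Ha Hb Hab [g [[Hreg [Hinj Himg]] Hlen]].
  set (X := fun u => fst (g u)). set (Y := fun u => snd (g u)).
  assert (Hin : forall t, 0 <= t <= 1 -> horo_arc v a b c (g t)).
  { intros t Ht. apply Himg. exists t; auto. }
  assert (HY : forall t, 0 <= t <= 1 -> 0 < Y t).
  { intros t Ht. destruct (Hin t Ht) as [[HP _] _]. exact HP. }
  set (Fd := fun t => match v with
             | Fin r => (Derive X t * Y t - (X t - r) * Derive Y t) / (Y t * Y t)
             | Inf => Derive X t / c end).
  apply (len_core (fun t => phi v c (g t)) Fd).
  - intros t Ht. destruct (Hreg t Ht) as [HX [HYd _]]. fold X Y in HX, HYd.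
    pose proof (HY t Ht) as HYt.
    unfold Fd. destruct v as [r|]; cbn [phi].
    + change (is_derive (fun u => (X u - r) / Y u) t
        ((Derive X t * Y t - (X t - r) * Derive Y t) / (Y t * Y t))).
      auto_derive. repeat split; auto; lra.
      change (Derive (fun x => X x)) with (Derive X). change (Derive (fun x => Y x)) with (Derive Y).
      field; lra.
    + change (is_derive (fun u => X u / c) t (Derive X t / c)).
      auto_derive; auto. change (Derive (fun x => X x)) with (Derive X). field; lra.
  - intros t Ht. destruct (Hreg t Ht) as [HX [HYd [HdX HdY]]]. fold X Y in HX, HYd, HdX, HdY.
    pose proof (HY t Ht) as HYt.
    apply continuity_pt_filterlim in HdX. apply continuity_pt_filterlim in HdY.
    unfold Fd. destruct v as [r|].
    + apply (cpt_Fin X Y (Derive X) (Derive Y) r t); auto using cont_of_ex; lra.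
    + apply (continuity_pt_div (Derive X) (fun _ => c)); auto.
      apply continuity_pt_const; intros u w; auto. lra.
  - intros t1 t2 H1 H2 E. apply Hinj; auto.
    apply (phi_inj v c); auto. apply (Hin t1 H1). apply (Hin t2 H2).
  - intros t Ht. apply btw_mm. destruct (Hin t Ht) as [Hh Hw].
    apply (wedge_char v a b _ Ha Hb Hab) in Hw. destruct Hw as [_ Hw].
    apply btw_mm in Hw. rewrite (phi_uv v c _ Hh). unfold Phi.
    apply btw_scale; auto. apply scal_ne0; auto.
  - destruct (phi_pt v c (Phi v c a) Hc) as [P [HPh HPe]].
    destruct (proj1 (Himg P)) as [t [Ht E]].
    { split; auto. apply (wedge_char v a b _ Ha Hb Hab). split; [apply HPh|].
      rewrite (phi_uv v c _ HPh) in HPe. unfold Phi in HPe.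
      apply Rmult_eq_reg_l in HPe; [|apply scal_ne0; auto]. rewrite HPe.
      unfold Rmin, Rmax; destruct Rle_dec; lra. }
    exists t; split; auto. rewrite E; auto.
  - destruct (phi_pt v c (Phi v c b) Hc) as [P [HPh HPe]].
    destruct (proj1 (Himg P)) as [t [Ht E]].
    { split; auto. apply (wedge_char v a b _ Ha Hb Hab). split; [apply HPh|].
      rewrite (phi_uv v c _ HPh) in HPe. unfold Phi in HPe.
      apply Rmult_eq_reg_l in HPe; [|apply scal_ne0; auto]. rewrite HPe.
      unfold Rmin, Rmax; destruct Rle_dec; lra. }
    exists t; split; auto. rewrite E; auto.
  - rewrite <- Hlen. unfold hlen. apply RInt_ext. intros t Ht.
    rewrite Rmin_left, Rmax_right in Ht by lra.
    assert (Ht' : 0 <= t <= 1) by lra.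
    destruct (Hreg t Ht') as [HX [HYd _]]. fold X Y in HX, HYd |- *.
    pose proof (HY t Ht') as HYt.
    destruct (Hin t Ht') as [Hh _].
    unfold Fd. destruct v as [r|].
    + apply (speed_Fin (X t - r) (Y t) _ _ c); auto.
      * apply (horoF r c (g t) Hh).
      * set (h := fun u => (X u - r) ^ 2 + Y u ^ 2 - c * Y u).
        apply (zero_deriv h t); auto.
        { intros u Hu. unfold h. destruct (Hin u Hu) as [Hhu _].
          pose proof (horoF r c (g u) Hhu). unfold X, Y. lra. }
        unfold h. auto_derive. repeat split; auto.
        change (Derive (fun x => X x)) with (Derive X). change (Derive (fun x => Y x)) with (Derive Y).
        field.
    + assert (D0 : Derive Y t = 0).
      { apply (zero_deriv (fun u => Y u - c) t); auto.
        - intros u Hu. destruct (Hin u Hu) as [[_ [_ Eu]] _]. unfold Y. lra.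
        - auto_derive; auto. change (Derive (fun x => Y x)) with (Derive Y). ring. }
      rewrite D0. rewrite <- speed_Inf; auto. f_equal.
      destruct Hh as [_ [_ Eh]]. unfold Y. rewrite Eh. auto.
Qed.


Lemma ln_div' a b : 0 < a -> 0 < b -> ln (a / b) = ln a - ln b.
Proof. intros. unfold Rdiv. assert (0 < / b) by (apply Rinv_0_lt_compat; auto).
  rewrite ln_mult by auto. rewrite ln_Rinv by auto. ring. Qed.

Lemma ln_le' a b : 0 < a -> a <= b -> ln a <= ln b.
Proof. intros Ha H. destruct (Req_dec a b). subst; lra. apply Rlt_le, ln_increasing; lra. Qed.

Lemma arcosh_half l1 l2 : 0 < l2 -> l2 <= l1 ->
  arcosh ((l1 ^ 2 + l2 ^ 2) / (2 * l1 * l2)) = ln l1 - ln l2.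
Proof.
  intros H2 H12. unfold arcosh.
  assert (E : ((l1 ^ 2 + l2 ^ 2) / (2 * l1 * l2)) ^ 2 - 1 = Rsqr ((l1 ^ 2 - l2 ^ 2) / (2 * l1 * l2))).
  { unfold Rsqr. field. lra. }
  rewrite E, sqrt_Rsqr.
  - replace ((l1 ^ 2 + l2 ^ 2) / (2 * l1 * l2) + (l1 ^ 2 - l2 ^ 2) / (2 * l1 * l2)) with (l1 / l2)
      by (field; lra).
    apply ln_div'; lra.
  - apply Rdiv_le_0_compat; nra.
Qed.

Lemma arcosh_l l1 l2 : 0 < l1 -> 0 < l2 ->
  arcosh ((l1 ^ 2 + l2 ^ 2) / (2 * l1 * l2)) = Rabs (ln l1 - ln l2).
Proof.
  intros H1 H2. destruct (Rle_dec l2 l1).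
  - rewrite arcosh_half; auto. rewrite Rabs_right; auto.
    pose proof (ln_le' l2 l1 H2 r). lra.
  - replace ((l1 ^ 2 + l2 ^ 2) / (2 * l1 * l2)) with ((l2 ^ 2 + l1 ^ 2) / (2 * l2 * l1)) by (field; lra).
    rewrite arcosh_half; [|lra|lra]. rewrite Rabs_left1; [ring|].
    pose proof (ln_le' l1 l2 H1 ltac:(lra)). lra.
Qed.

Definition lam (x y : ipt) (P : R * R) : R :=
  match x, y with
  | Fin a, Fin b => sqrt ((fst P - a) / (b - fst P))
  | Fin a, Inf => snd P
  | Inf, Fin b => 1 / snd P
  | Inf, Inf => 0
  end.

Lemma onFF a b P : on_geod (Fin a) (Fin b) P ->
  a <> b /\ 0 < snd P /\ (fst P - a) * (b - fst P) = snd P ^ 2 /\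
  b - fst P <> 0 /\ 0 < (fst P - a) / (b - fst P).
Proof.
  intros [HP [Hab E]]. unfold inH in HP.
  assert (E' : (fst P - a) * (b - fst P) = snd P ^ 2) by lra.
  assert (0 < snd P ^ 2) by (apply pow_lt; auto).
  assert (Hn : b - fst P <> 0) by (intro Z; rewrite Z in E'; lra).
  split; auto. split; auto. split; auto. split; auto.
  replace ((fst P - a) / (b - fst P)) with ((fst P - a) * (b - fst P) / Rsqr (b - fst P)) by (unfold Rsqr; field; auto).
  apply Rdiv_lt_0_compat; [lra|]. apply Rsqr_pos_lt; auto.
Qed.

Lemma lam_pos x y P : x <> y -> on_geod x y P -> 0 < lam x y P.
Proof.
  intros Hxy HP. destruct x as [a|]; destruct y as [b|]; unfold lam.
  - apply onFF in HP. destruct HP as [_ [_ [_ [_ H]]]]. apply sqrt_lt_R0; auto.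
  - destruct HP as [H _]; exact H.
  - destruct HP as [H _]. unfold inH in H. apply Rdiv_lt_0_compat; lra.
  - exfalso; auto.
Qed.

Lemma FF_Y a b P : on_geod (Fin a) (Fin b) P ->
  snd P = lam (Fin a) (Fin b) P * Rabs (b - fst P) /\
  lam (Fin a) (Fin b) P ^ 2 = (fst P - a) / (b - fst P).
Proof.
  intros HP. assert (Hab' : Fin a <> Fin b) by (destruct HP as [_ [H _]]; congruence).
  pose proof (lam_pos _ _ _ Hab' HP) as Hl.
  apply onFF in HP. destruct HP as [Hab [HY [E [Hn HK]]]].
  unfold lam in *. set (K := (fst P - a) / (b - fst P)) in *.
  assert (HK2 : sqrt K ^ 2 = K) by (rewrite <- Rsqr_pow2; apply Rsqr_sqrt; lra).
  split; auto.
  apply Rsqr_inj; [lra| |].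
  - apply Rmult_le_pos; [lra|apply Rabs_pos].
  - rewrite Rsqr_mult, <- Rsqr_abs. rewrite !Rsqr_pow2, HK2, <- E. unfold K. field. auto.
Qed.

Lemma dist_lam x y P Q : x <> y -> on_geod x y P -> on_geod x y Q ->
  dH P Q = Rabs (ln (lam x y P) - ln (lam x y Q)).
Proof.
  intros Hxy HP HQ.
  pose proof (lam_pos _ _ _ Hxy HP) as HlP. pose proof (lam_pos _ _ _ Hxy HQ) as HlQ.
  rewrite <- arcosh_l; auto. unfold dH. f_equal.
  destruct x as [a|]; destruct y as [b|].
  - destruct (FF_Y a b P HP) as [YP KP]. destruct (FF_Y a b Q HQ) as [YQ KQ].
    apply onFF in HP. destruct HP as [Hab [HYP [EP [HnP _]]]].
    apply onFF in HQ. destruct HQ as [_ [HYQ [EQ [HnQ _]]]].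
    set (lp := lam (Fin a) (Fin b) P) in *. set (lq := lam (Fin a) (Fin b) Q) in *.
    set (sp := b - fst P) in *. set (sq := b - fst Q) in *.
    assert (Sp : sp * (1 + lp ^ 2) = b - a) by (rewrite KP; unfold sp; field; auto).
    assert (Sq : sq * (1 + lq ^ 2) = b - a) by (rewrite KQ; unfold sq; field; auto).
    assert (Hs : 0 < sp * sq).
    { assert (H1 : 0 < 1 + lp^2) by (assert (0 <= lp^2) by apply pow2_ge_0; lra).
      assert (H2 : 0 < 1 + lq^2) by (assert (0 <= lq^2) by apply pow2_ge_0; lra).
      assert (H3 : 0 < Rsqr (b - a)) by (apply Rsqr_pos_lt; lra).
      assert (H4 : (sp * sq) * ((1 + lp^2) * (1 + lq^2)) = Rsqr (b - a)).
      { unfold Rsqr. rewrite <- Sp at 1. rewrite <- Sq. ring. }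
      assert (H5 : 0 < (1 + lp^2) * (1 + lq^2)) by (apply Rmult_lt_0_compat; auto).
      destruct (Rlt_dec 0 (sp * sq)); auto. nra. }
    assert (YY : snd P * snd Q = lp * lq * (sp * sq)).
    { rewrite YP, YQ. rewrite <- (Rabs_right (sp * sq)) by lra. rewrite Rabs_mult. ring. }
    assert (XX : fst P - fst Q = sq - sp) by (unfold sp, sq; ring).
    assert (N : (fst P - fst Q) ^ 2 + (snd P - snd Q) ^ 2 + 2 * (snd P * snd Q)
                = sp * sq * (lp ^ 2 + lq ^ 2)).
    { transitivity ((sq - sp) ^ 2 + snd P ^ 2 + snd Q ^ 2); [rewrite <- XX; ring|].
      rewrite <- EP, <- EQ.
      assert (Lp : lp ^ 2 = (b - a) / sp - 1) by (rewrite <- Sp; field; auto).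
      assert (Lq : lq ^ 2 = (b - a) / sq - 1) by (rewrite <- Sq; field; auto).
      rewrite Lp, Lq. unfold sp, sq. field. split; auto. }
    replace (1 + ((fst P - fst Q) ^ 2 + (snd P - snd Q) ^ 2) / (2 * snd P * snd Q))
      with (((fst P - fst Q) ^ 2 + (snd P - snd Q) ^ 2 + 2 * (snd P * snd Q)) / (2 * (snd P * snd Q)))
      by (field; lra).
    rewrite N, YY. field. split; [lra|split; lra].
  - destruct HP as [HP EP]; destruct HQ as [HQ EQ]. unfold inH in *. unfold lam.
    rewrite EP, EQ. field. lra.
  - destruct HP as [HP EP]; destruct HQ as [HQ EQ]. unfold inH in *. unfold lam.
    rewrite EP, EQ. field. lra.
  - exfalso; auto.
Qed.

Lemma FF_sign a b P Q : on_geod (Fin a) (Fin b) P -> on_geod (Fin a) (Fin b) Q ->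
  0 < (b - fst P) * (b - fst Q).
Proof.
  intros HP HQ. apply onFF in HP. apply onFF in HQ.
  destruct HP as [Hab [HYP [EP _]]]. destruct HQ as [_ [HYQ [EQ _]]].
  assert (0 < snd P ^ 2) by (apply pow_lt; auto).
  assert (0 < snd Q ^ 2) by (apply pow_lt; auto).
  destruct (Rlt_dec a b).
  - assert (0 < b - fst P) by nra. assert (0 < b - fst Q) by nra. nra.
  - assert (b < a) by lra. assert (b - fst P < 0) by nra. assert (b - fst Q < 0) by nra. nra.
Qed.

Lemma inv_lt_iff p q : 0 < p -> 0 < q -> (1 / p < 1 / q <-> q < p).
Proof.
  intros Hp Hq. unfold Rdiv. rewrite !Rmult_1_l. split; intro H.
  - destruct (Rlt_dec q p); auto. exfalso.
    assert (p <= q) by lra. destruct (Req_dec p q). subst; lra.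
    assert (/ q < / p) by (apply Rinv_lt_contravar; [nra|lra]). lra.
  - apply Rinv_lt_contravar; [nra|lra].
Qed.

Lemma ahead_lam x y P Q : x <> y -> on_geod x y P -> on_geod x y Q ->
  (ahead x y P Q <-> lam x y P < lam x y Q).
Proof.
  intros Hxy HP HQ. destruct x as [a|]; destruct y as [b|]; unfold ahead, lam.
  - pose proof (FF_sign a b P Q HP HQ) as Hs.
    apply onFF in HP. destruct HP as [Hab [_ [_ [HnP KP]]]].
    apply onFF in HQ. destruct HQ as [_ [_ [_ [HnQ KQ]]]].
    assert (D : (fst Q - a) / (b - fst Q) - (fst P - a) / (b - fst P) =
                (fst Q - fst P) * (b - a) / ((b - fst P) * (b - fst Q))) by (field; auto).
    split; intro H.
    + apply sqrt_lt_1_alt. split; [lra|].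
      assert (0 < (fst Q - fst P) * (b - a) / ((b - fst P) * (b - fst Q)))
        by (apply Rdiv_lt_0_compat; lra). lra.
    + apply sqrt_lt_0_alt in H.
      assert (H1 : 0 < (fst Q - fst P) * (b - a) / ((b - fst P) * (b - fst Q))) by lra.
      replace ((fst Q - fst P) * (b - a)) with
        ((fst Q - fst P) * (b - a) / ((b - fst P) * (b - fst Q)) * ((b - fst P) * (b - fst Q)))
        by (field; lra).
      apply Rlt_gt, Rmult_lt_0_compat; auto.
  - lra.
  - destruct HP as [HP _]; destruct HQ as [HQ _]. unfold inH in *.
    rewrite inv_lt_iff; auto. lra.
  - exfalso; auto.
Qed.

Definition Wv (x y p : ipt) : R :=
  match x, y, p with
  | Fin a, Fin b, Fin t => (t - a) / (b - t)
  | Fin a, Fin b, Inf => -1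
  | Fin a, Inf, Fin t => t - a
  | Inf, Fin b, Fin t => 1 / (b - t)
  | _, _, _ => 0
  end.

Lemma absq2 z : (Rabs z / 2) ^ 2 = z ^ 2 / 4.
Proof. replace ((Rabs z / 2) ^ 2) with (Rabs z ^ 2 / 4) by field. rewrite pow2_abs. auto. Qed.

Lemma sqY (Y z : R) : 0 < Y -> Y ^ 2 = z ^ 2 -> Y = Rabs z.
Proof.
  intros HY E. apply Rsqr_inj; [lra|apply Rabs_pos|]. rewrite <- Rsqr_abs.
  rewrite !Rsqr_pow2. auto.
Qed.

Lemma foot_lam x y p f : x <> y -> p <> x -> p <> y -> foot p x y f ->
  lam x y f = Rabs (Wv x y p).
Proof.
  intros Hxy Hpx Hpy [Hf [e [Hep [O Hpe]]]].
  destruct x as [a|]; destruct y as [b|]; [| | |exfalso; auto].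
  -
    pose proof Hf as Hf'. apply onFF in Hf'. destruct Hf' as [Hab [HY [EY [Hn HK]]]].
    unfold lam, Wv.
    destruct p as [t|]; destruct e as [e|]; [| | |exfalso; auto].
    + unfold geod_orth, gdesc in O.
      destruct (Req_EM_T t e) as [Hte|Hte]; [exfalso; apply Hep; subst; auto|].
      destruct (Req_EM_T a b) as [Hab'|Hab']; [contradiction|].
      rewrite !absq2 in O.
      assert (O' : e * (2 * t - a - b) = t * (a + b) - 2 * a * b) by lra.
      destruct Hf as [_ [_ C2]]. destruct Hpe as [_ [_ C1]].
      set (X := fst f) in *. set (Y := snd f) in *.
      assert (Lin : X * (a + b - t - e) = a * b - t * e) by lra.
      assert (E1 : X * (a + b - t - e) * (2 * t - a - b) = (a * b - t * e) * (2 * t - a - b))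
        by (rewrite Lin; ring).
      assert (XN : X * ((t - a) ^ 2 + (b - t) ^ 2) = - (a * b) * (2 * t - a - b) + t * (e * (2 * t - a - b))).
      { transitivity (- X * ((a + b - t) * (2 * t - a - b) - (t * (a + b) - 2 * a * b))); [ring|].
        rewrite <- O'. transitivity (- (X * (a + b - t - e) * (2 * t - a - b))); [ring|].
        rewrite E1. ring. }
      rewrite O' in XN.
      assert (Htb : b - t <> 0) by (intro Z; apply Hpy; f_equal; lra).
      assert (K : (X - a) * (b - t) ^ 2 = (t - a) ^ 2 * (b - X)) by lra.
      replace ((X - a) / (b - X)) with (Rsqr ((t - a) / (b - t))).
      * apply sqrt_Rsqr_abs.
      * unfold Rsqr. apply (Rmult_eq_reg_r ((b - X) * (b - t) ^ 2)).
        -- field_simplify; auto. lra.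
        -- apply Rmult_integral_contrapositive; split; auto. apply pow_nonzero; auto.
    + unfold geod_orth, gdesc in O.
      destruct (Req_EM_T a b) as [Hab'|Hab']; [contradiction|].
      destruct Hpe as [_ Xt]. set (X := fst f) in *. subst t.
      assert (Hab2 : b - (a + b) / 2 <> 0) by lra.
      replace ((X - a) / (b - X)) with 1 by (rewrite Xt; field; lra).
      replace (((a + b) / 2 - a) / (b - (a + b) / 2)) with 1 by (field; lra).
      rewrite sqrt_1, Rabs_right; lra.
    + unfold geod_orth, gdesc in O.
      destruct (Req_EM_T a b) as [Hab'|Hab']; [contradiction|].
      destruct Hpe as [_ Xt]. set (X := fst f) in *. subst e.
      assert (Hab2 : b - (a + b) / 2 <> 0) by lra.
      replace ((X - a) / (b - X)) with 1 by (rewrite Xt; field; lra).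
      rewrite sqrt_1, Rabs_left; lra.
  -
    unfold lam, Wv.
    destruct p as [t|]; [|exfalso; auto].
    destruct e as [e|]; unfold geod_orth, gdesc in O.
    + destruct (Req_EM_T t e) as [Hte|Hte]; [exfalso; apply Hep; subst; auto|].
      destruct Hf as [HY Xa]. destruct Hpe as [_ [_ C1]]. unfold inH in HY.
      apply sqY; auto. rewrite Xa in C1. rewrite <- O in C1.
      replace e with (2 * a - t) in C1 by lra. lra.
    + contradiction.
  -
    unfold lam, Wv.
    destruct p as [t|]; [|exfalso; auto].
    destruct e as [e|]; unfold geod_orth, gdesc in O.
    + destruct (Req_EM_T t e) as [Hte|Hte]; [exfalso; apply Hep; subst; auto|].
      destruct Hf as [HY Xb]. destruct Hpe as [_ [_ C1]]. unfold inH in HY.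
      assert (Yv : snd f = Rabs (b - t)).
      { apply sqY; auto. rewrite Xb in C1. rewrite <- O in C1.
        replace e with (2 * b - t) in C1 by lra. lra. }
      rewrite Yv. unfold Rdiv. rewrite !Rmult_1_l. rewrite Rabs_inv. auto.
    + contradiction.
Qed.


Lemma shear_exp x y p q s : x <> y -> p <> x -> p <> y -> q <> x -> q <> y ->
  is_shear x y p q s -> exp s = Rabs (Wv x y q) / Rabs (Wv x y p).
Proof.
  intros Hxy Hpx Hpy Hqx Hqy [f1 [f2 [F1 [F2 Sd]]]].
  pose proof (foot_lam x y p f1 Hxy Hpx Hpy F1) as L1.
  pose proof (foot_lam x y q f2 Hxy Hqx Hqy F2) as L2.
  destruct F1 as [O1 _]. destruct F2 as [O2 _].
  pose proof (lam_pos x y f1 Hxy O1) as P1. pose proof (lam_pos x y f2 Hxy O2) as P2.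
  rewrite <- L1, <- L2.
  assert (Es : s = ln (lam x y f2) - ln (lam x y f1)).
  { destruct Sd as [[Ha Es]|[Ha Es]]; rewrite Es, (dist_lam x y f1 f2 Hxy O1 O2).
    - apply (ahead_lam x y f1 f2 Hxy O1 O2) in Ha.
      pose proof (ln_increasing _ _ P1 Ha). rewrite Rabs_left; lra.
    - assert (lam x y f2 <= lam x y f1).
      { destruct (Rle_dec (lam x y f2) (lam x y f1)); auto. exfalso; apply Ha.
        apply (ahead_lam x y f1 f2 Hxy O1 O2). lra. }
      pose proof (ln_le' _ _ P2 H). rewrite Rabs_right; lra. }
  rewrite Es. unfold Rminus. rewrite exp_plus, exp_Ropp, !exp_ln; auto.
Qed.

Lemma on_geod_sym x y P : on_geod x y P -> on_geod y x P.
Proof.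
  unfold on_geod. destruct x as [a|]; destruct y as [b|]; intros [HP H]; split; auto.
  destruct H as [H1 H2]. split; auto. lra.
Qed.

Lemma Wv_swap x y r : x <> y -> r <> x -> r <> y ->
  Rabs (Wv y x r) = / Rabs (Wv x y r).
Proof.
  intros Hxy Hx Hy. rewrite <- Rabs_inv.
  destruct x as [a|]; destruct y as [b|]; destruct r as [t|]; unfold Wv;
    try (exfalso; congruence).
  - assert (t <> a) by congruence. assert (t <> b) by congruence.
    f_equal. field. split; lra.
  - f_equal. field.
  - assert (t <> a) by congruence. replace (1 / (a - t)) with (- / (t - a)) by (field; lra).
    apply Rabs_Ropp.
  - assert (t <> b) by congruence. replace (/ (1 / (b - t))) with (- (t - b)) by (field; lra).
    rewrite Rabs_Ropp. auto.
Qed.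

Lemma cFF r1 r2 c1 c2 z : horocycle (Fin r1) c1 z -> horocycle (Fin r2) c2 z ->
  on_geod (Fin r1) (Fin r2) z -> c1 * c2 = (r2 - r1) ^ 2.
Proof.
  intros H1 H2 G. pose proof (horoF _ _ _ H1) as E1. pose proof (horoF _ _ _ H2) as E2.
  apply onFF in G. destruct G as [_ [HY [EG _]]].
  set (X := fst z) in *. set (Y := snd z) in *.
  assert (Key : (c1 * Y) * (c2 * Y) = Y ^ 2 * (r2 - r1) ^ 2 + ((X - r1) * (X - r2) + Y ^ 2) ^ 2).
  { rewrite <- E1, <- E2. ring. }
  replace ((X - r1) * (X - r2) + Y ^ 2) with 0 in Key by lra.
  apply (Rmult_eq_reg_r (Y ^ 2)); [|apply pow_nonzero; lra].
  lra.
Qed.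

Lemma Rabs_mult_div a b c d : d <> 0 -> a * b = c / d \/ a * b = - (c / d) ->
  Rabs a * Rabs b = Rabs c / Rabs d.
Proof.
  intros Hd H. rewrite <- Rabs_mult, <- Rabs_div by auto.
  destruct H as [H|H]; rewrite H; auto. apply Rabs_Ropp.
Qed.

Lemma prodL v1 v2 p q c1 c2 z : v1 <> v2 -> p <> v1 -> p <> v2 -> q <> v1 -> q <> v2 ->
  horocycle v1 c1 z -> horocycle v2 c2 z -> on_geod v1 v2 z ->
  Rabs (Phi v1 c1 v2 - Phi v1 c1 p) * Rabs (Phi v2 c2 v1 - Phi v2 c2 q) =
  Rabs (Wv v1 v2 q) / Rabs (Wv v1 v2 p).
Proof.
  intros H12 Hp1 Hp2 Hq1 Hq2 Z1 Z2 G.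
  pose proof Z1 as [_ [Hc1 _]]. pose proof Z2 as [_ [Hc2 _]].
  destruct v1 as [r1|]; destruct v2 as [r2|]; [| | |exfalso; auto].
  - pose proof (cFF r1 r2 c1 c2 z Z1 Z2 G) as C.
    assert (r1 <> r2) by congruence.
    assert (Ec2 : c2 = (r2 - r1) ^ 2 / c1) by (rewrite <- C; field; lra).
    unfold Phi, scal, muv, Wv.
    destruct p as [t|]; destruct q as [u|].
    + assert (t <> r1) by congruence. assert (t <> r2) by congruence.
      assert (u <> r1) by congruence. assert (u <> r2) by congruence.
      apply Rabs_mult_div. { unfold Rdiv; apply Rmult_integral_contrapositive_currified; [lra| apply Rinv_neq_0_compat; lra]. }
      right. rewrite Ec2. field. repeat split; lra.
    + assert (t <> r1) by congruence. assert (t <> r2) by congruence.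
      apply Rabs_mult_div. { unfold Rdiv; apply Rmult_integral_contrapositive_currified; [lra| apply Rinv_neq_0_compat; lra]. }
      right. rewrite Ec2. field. repeat split; lra.
    + assert (u <> r1) by congruence. assert (u <> r2) by congruence.
      apply Rabs_mult_div. { lra. }
      right. rewrite Ec2. field. repeat split; lra.
    + apply Rabs_mult_div. { lra. }
      right. rewrite Ec2. field. repeat split; lra.
  - destruct p as [t|]; [|exfalso; auto]. destruct q as [u|]; [|exfalso; auto].
    assert (t <> r1) by congruence. assert (u <> r1) by congruence.
    destruct G as [HY Xz]. destruct Z2 as [_ [_ Yz]].
    pose proof (horoF _ _ _ Z1) as E1. rewrite Xz, Yz in E1.
    assert (Ec : c1 = c2) by (apply (Rmult_eq_reg_r c2); [|lra]; nra).
    unfold Phi, scal, muv, Wv. rewrite <- Ec.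
    apply Rabs_mult_div. { lra. }
    left. field. repeat split; lra.
  - destruct p as [t|]; [|exfalso; auto]. destruct q as [u|]; [|exfalso; auto].
    assert (t <> r2) by congruence. assert (u <> r2) by congruence.
    destruct G as [HY Xz]. destruct Z1 as [_ [_ Yz]].
    pose proof (horoF _ _ _ Z2) as E2. rewrite Xz, Yz in E2.
    assert (Ec : c1 = c2) by (apply (Rmult_eq_reg_r c1); [|lra]; nra).
    unfold Phi, scal, muv, Wv. rewrite <- Ec.
    apply Rabs_mult_div. { apply inv_ne0. lra. }
    left. field. repeat split; lra.
Qed.

Lemma Wv_ne0 x y r : x <> y -> r <> x -> r <> y -> Wv x y r <> 0.
Proof.
  intros Hxy Hx Hy.
  destruct x as [a|]; destruct y as [b|]; destruct r as [t|]; unfold Wv;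
    try (exfalso; congruence).
  - assert (t <> a) by congruence. assert (t <> b) by congruence.
    unfold Rdiv; apply Rmult_integral_contrapositive_currified; [lra| apply Rinv_neq_0_compat; lra].
  - lra.
  - assert (t <> a) by congruence. lra.
  - assert (t <> b) by congruence. apply inv_ne0. lra.
Qed.

Lemma Lpos v a b c : 0 < c -> v <> a -> v <> b -> a <> b -> 0 < Rabs (Phi v c a - Phi v c b).
Proof.
  intros Hc Ha Hb Hab. apply Rabs_pos_lt. unfold Phi. intro E.
  apply Hab, (muv_inj v); auto.
  apply (Rmult_eq_reg_l (scal v c)); [lra|apply scal_ne0; auto].
Qed.

Theorem lemmaA2 (x y v1 v2 p q : ipt) (s c1 c2 L1 L2 : R) (z : R * R) :
  x <> y ->
  ((v1 = x /\ v2 = y) \/ (v1 = y /\ v2 = x)) ->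
  p <> x -> p <> y -> q <> x -> q <> y ->
  geod_left_of x y v1 p ->
  geod_left_of y x v2 q ->
  is_shear x y p q s ->
  horocycle v1 c1 z -> on_geod x y z -> horocycle v2 c2 z ->
  arc_length (horo_arc v1 v2 p c1) L1 ->
  arc_length (horo_arc v2 v1 q c2) L2 ->
  (v1 = x -> L2 = exp s / L1) /\ (v1 = y -> L2 = exp (- s) / L1).
Proof.
  intros Hxy Hv Hpx Hpy Hqx Hqy _ _ Hsh Hz1 Hz Hz2 HL1 HL2.
  pose proof Hz1 as [_ [Hc1 _]]. pose proof Hz2 as [_ [Hc2 _]].
  pose proof (shear_exp x y p q s Hxy Hpx Hpy Hqx Hqy Hsh) as Es.
  pose proof (Wv_ne0 x y p Hxy Hpx Hpy) as Wp. pose proof (Wv_ne0 x y q Hxy Hqx Hqy) as Wq.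
  apply Rabs_pos_lt in Wp. apply Rabs_pos_lt in Wq.
  destruct Hv as [[E1 E2]|[E1 E2]]; subst v1 v2.
  - assert (Hyx : y <> x) by auto.
    apply (horo_len x y p c1 L1 Hc1 Hxy (not_eq_sym Hpx) (not_eq_sym Hpy)) in HL1.
    apply (horo_len y x q c2 L2 Hc2 Hyx (not_eq_sym Hqy) (not_eq_sym Hqx)) in HL2.
    pose proof (Lpos x y p c1 Hc1 Hxy (not_eq_sym Hpx) (not_eq_sym Hpy)) as P1.
    pose proof (prodL x y p q c1 c2 z Hxy Hpx Hpy Hqx Hqy Hz1 Hz2 Hz) as PL.
    split.
    + intros _. rewrite Es, <- PL, HL1, HL2. field. lra.
    + intro E. exfalso; auto.
  - assert (Hyx : y <> x) by auto.
    apply (horo_len y x p c1 L1 Hc1 Hyx (not_eq_sym Hpy) (not_eq_sym Hpx)) in HL1.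
    apply (horo_len x y q c2 L2 Hc2 Hxy (not_eq_sym Hqx) (not_eq_sym Hqy)) in HL2.
    pose proof (Lpos y x p c1 Hc1 Hyx (not_eq_sym Hpy) (not_eq_sym Hpx)) as P1.
    pose proof (prodL y x p q c1 c2 z Hyx Hpy Hpx Hqy Hqx Hz1 Hz2 (on_geod_sym _ _ _ Hz)) as PL.
    rewrite (Wv_swap x y q Hxy Hqx Hqy), (Wv_swap x y p Hxy Hpx Hpy) in PL.
    split.
    + intro E. exfalso; auto.
    + intros _. rewrite exp_Ropp, Es. rewrite HL1, HL2 in *.
      apply (Rmult_eq_reg_l (Rabs (Phi y c1 x - Phi y c1 p))); [|lra].
      rewrite PL. field. repeat split; lra.
Qed.
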